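(* For all integers $i,j,k,m\ge0$: if $\omega_i+\omega_j+\omega_k-\omega_m=0$, or $\omega_i+\omega_j-\omega_k+\omega_m=0$, or $\omega_i-\omega_j+\omega_k+\omega_m=0$, or $-\omega_i+\omega_j+\omega_k+\omega_m=0$, then $C_{ijkm}=0$.
   Context: $\omega_n=n+1$ and $C_{ijkm}=\frac2\pi\int_{-1}^1U_i(y)U_j(y)U_k(y)U_m(y)\sqrt{1-y^2}\,dy$, $U_n$ the Chebyshev polynomial of the second kind of degree $n$. *)

(* Defs.v *)
From Stdlib Require Import Reals.
From Coquelicot Require Import Coquelicot.
Open Scope R_scope.

(* Chebyshev polynomials of the second kind, as functions R -> R:
   U_0 = 1, U_1 = 2y, U_{n+2} = 2y U_{n+1} - U_n. *)
Fixpoint chebU_pair (n : nat) (y : R) : R * R :=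
  match n with
  | O => (1, 2 * y)
  | S n' => let p := chebU_pair n' y in (snd p, 2 * y * snd p - fst p)
  end.

Definition chebU (n : nat) (y : R) : R := fst (chebU_pair n y).

Definition omega (n : nat) : R := INR n + 1.

Definition Ccoef (i j k m : nat) : R :=
  2 / PI * RInt (fun y => chebU i y * chebU j y * chebU k y * chebU m y
                          * sqrt (1 - y ^ 2)) (-1) 1.

(* Main.v *)
Require Import Defs.
From Stdlib Require Import Reals Lra Lia List.
From Coquelicot Require Import Coquelicot.
Open Scope R_scope.

Lemma chebU_SS n y : chebU (S (S n)) y = 2 * y * chebU (S n) y - chebU n y.
Proof. reflexivity. Qed.

Lemma chebU_0 y : chebU 0 y = 1. Proof. reflexivity. Qed.
Lemma chebU_1 y : chebU 1 y = 2 * y. Proof. reflexivity. Qed.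

Lemma chebU_cont n x : continuous (chebU n) x.
Proof.
  assert (H : continuous (chebU n) x /\ continuous (chebU (S n)) x).
  { induction n as [|n [IH1 IH2]].
    - split.
      + apply continuous_ext with (fun _ => 1). intros; reflexivity. apply continuous_const.
      + apply continuous_ext with (fun y => mult 2 y). intros; reflexivity.
        apply (@continuous_mult R_UniformSpace R_AbsRing). apply continuous_const. apply continuous_id.
    - split; [exact IH2|].
      apply continuous_ext with (fun y => minus (mult (mult 2 y) (chebU (S n) y)) (chebU n y)).
      { intros y. rewrite chebU_SS. unfold minus, mult, plus, opp; simpl. ring. }
      apply (@continuous_minus R_UniformSpace R_AbsRing R_NormedModule); [|exact IH1].
      apply (@continuous_mult R_UniformSpace R_AbsRing); [|exact IH2].
      apply (@continuous_mult R_UniformSpace R_AbsRing). apply continuous_const. apply continuous_id. }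
  apply H.
Qed.

Lemma sin_U n t : sin t * chebU n (cos t) = sin (INR (S n) * t).
Proof.
  assert (H : sin t * chebU n (cos t) = sin (INR (S n) * t) /\
              sin t * chebU (S n) (cos t) = sin (INR (S (S n)) * t)).
  { induction n as [|n [IH1 IH2]].
    - rewrite chebU_0, chebU_1. simpl. split.
      + rewrite Rmult_1_l, Rmult_1_r. reflexivity.
      + replace ((1+1)*t) with (t+t) by ring. rewrite sin_plus. ring.
    - split; [exact IH2|].
      rewrite chebU_SS.
      replace (sin t * (2 * cos t * chebU (S n) (cos t) - chebU n (cos t)))
        with (2 * cos t * (sin t * chebU (S n) (cos t)) - sin t * chebU n (cos t)) by ring.
      rewrite IH1, IH2.
      rewrite !S_INR.
      replace ((INR n + 1 + 1 + 1) * t) with ((INR n + 1 + 1) * t + t) by ring.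
      replace ((INR n + 1) * t) with ((INR n + 1 + 1) * t - t) by ring.
      rewrite sin_plus, sin_minus. ring. }
  apply H.
Qed.
Definition sinsum (L : list (R * Z)) (t : R) : R :=
  fold_right (fun p acc => fst p * sin (IZR (snd p) * t) + acc) 0 L.

Definition sexpr (d : nat) (g : R -> R) : Prop :=
  exists L, List.Forall (fun p => (Z.abs (snd p) <= Z.of_nat d)%Z) L /\
            forall t, g t = sinsum L t.

Lemma sinsum_cons p L t : sinsum (p :: L) t = fst p * sin (IZR (snd p) * t) + sinsum L t.
Proof. reflexivity. Qed.

Lemma sinsum_app L1 L2 t : sinsum (L1 ++ L2) t = sinsum L1 t + sinsum L2 t.
Proof. induction L1 as [|p L1 IH]; simpl; [ring|]. rewrite IH. ring. Qed.

Lemma expr_mono d d' g : (d <= d')%nat -> sexpr d g -> sexpr d' g.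
Proof.
  intros Hd [L [HF Hg]]. exists L. split; auto.
  eapply Forall_impl; [|exact HF]. intros p Hp; simpl in *; lia.
Qed.

Lemma expr_sub d f g : sexpr d f -> sexpr d g -> sexpr d (fun t => f t - g t).
Proof.
  intros [L1 [F1 H1]] [L2 [F2 H2]].
  exists (L1 ++ map (fun p => (- fst p, snd p)) L2). split.
  - apply Forall_app; split; auto. apply Forall_map.
    eapply Forall_impl; [|exact F2]. intros p Hp; simpl; auto.
  - intros t. rewrite sinsum_app, H1, H2.
    unfold Rminus. f_equal. clear. induction L2 as [|p L IH]; [simpl; ring|]. simpl map. rewrite !sinsum_cons. simpl fst; simpl snd. rewrite <- IH. ring.
Qed.

Lemma expr_cos d g : sexpr d g -> sexpr (S d) (fun t => 2 * cos t * g t).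
Proof.
  intros [L [F H]].
  exists (flat_map (fun p => (fst p, (snd p + 1)%Z) :: (fst p, (snd p - 1)%Z) :: nil) L).
  split.
  - clear H. induction L as [|p L IH]; simpl; auto. inversion F; subst.
    constructor; [simpl; lia|]. constructor; [simpl; lia|]. auto.
  - intros t. rewrite H. clear. induction L as [|p L IH]; [simpl; ring|].
    simpl flat_map. rewrite !sinsum_cons, <- IH. simpl fst; simpl snd. rewrite plus_IZR, minus_IZR.
    replace ((IZR (snd p) + 1) * t) with (IZR (snd p) * t + t) by ring.
    replace ((IZR (snd p) - 1) * t) with (IZR (snd p) * t - t) by ring.
    rewrite sin_plus, sin_minus. ring.
Qed.

Lemma expr_U j : forall d g, sexpr d g -> sexpr (d + j) (fun t => chebU j (cos t) * g t).
Proof.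
  intros d g Hg.
  assert (H : sexpr (d + j) (fun t => chebU j (cos t) * g t) /\
              sexpr (d + S j) (fun t => chebU (S j) (cos t) * g t)).
  { induction j as [|j [IH1 IH2]].
    - split.
      + rewrite Nat.add_0_r. destruct Hg as [L [F H]]. exists L; split; [auto|].
        intros t. rewrite chebU_0, H; ring.
      + replace (d + 1)%nat with (S d) by lia.
        destruct (expr_cos d g Hg) as [L [F H]]. exists L; split; [auto|].
        intros t. rewrite <- H. rewrite chebU_1. ring.
    - split; [exact IH2|].
      destruct (expr_sub (d + S (S j)) (fun t => 2 * cos t * (chebU (S j) (cos t) * g t))
                 (fun t => chebU j (cos t) * g t)) as [L [F H]].
      + replace (d + S (S j))%nat with (S (d + S j)) by lia. apply expr_cos; auto.
      + eapply expr_mono; [|exact IH1]. lia.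
      + exists L; split; [auto|]. intros t. rewrite <- H. rewrite chebU_SS. ring. }
  apply H.
Qed.
Lemma sin_intPI (k : Z) : sin (IZR k * PI) = 0.
Proof. apply sin_eq_0_1. exists k. reflexivity. Qed.

Lemma int_single (l N : Z) : (Z.abs l < N)%Z ->
  is_RInt (fun t => sin (IZR l * t) * sin (IZR N * t)) 0 PI 0.
Proof.
  intros HlN.
  assert (H1 : IZR N - IZR l <> 0).
  { rewrite <- minus_IZR. apply not_0_IZR. lia. }
  assert (H2 : IZR N + IZR l <> 0).
  { rewrite <- plus_IZR. apply not_0_IZR. lia. }
  set (F := fun t => sin ((IZR N - IZR l) * t) / (2 * (IZR N - IZR l))
                     - sin ((IZR N + IZR l) * t) / (2 * (IZR N + IZR l))).
  assert (HF : minus (F PI) (F 0) = 0).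
  { unfold F, minus, plus, opp; simpl.
    rewrite <- minus_IZR, <- plus_IZR, !sin_intPI, !Rmult_0_r, sin_0. unfold Rdiv; ring. }
  assert (HI : is_RInt (fun t => sin (IZR l * t) * sin (IZR N * t)) 0 PI (minus (F PI) (F 0))).
  2:{ rewrite HF in HI. exact HI. }
  apply (is_RInt_derive F).
  - intros x _. unfold F. auto_derive; [repeat split|].
    replace ((IZR N - IZR l) * x) with (IZR N * x - IZR l * x) by ring.
    replace ((IZR N + IZR l) * x) with (IZR N * x + IZR l * x) by ring.
    rewrite cos_minus, cos_plus. field. split; auto.
  - intros x _. apply (@ex_derive_continuous R_AbsRing R_NormedModule). auto_derive. auto.
Qed.

Lemma int_sum (L : list (R * Z)) (N : Z) :
  List.Forall (fun p => (Z.abs (snd p) < N)%Z) L ->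
  is_RInt (fun t => sinsum L t * sin (IZR N * t)) 0 PI 0.
Proof.
  induction L as [|p L IH]; intros HF.
  - apply is_RInt_ext with (fun _ => 0).
    { intros x _. simpl. ring. }
    assert (H0 := is_RInt_const 0 PI (0:R)).
    match type of H0 with is_RInt _ _ _ ?v => replace v with 0 in H0 by (unfold scal; simpl; unfold mult; simpl; ring) end.
    exact H0.
  - inversion HF; subst.
    apply is_RInt_ext with
      (fun t => plus (scal (fst p) (sin (IZR (snd p) * t) * sin (IZR N * t)))
                     (sinsum L t * sin (IZR N * t))).
    { intros x _. rewrite sinsum_cons. unfold plus, scal; simpl. unfold mult; simpl. ring. }
    assert (H0 := is_RInt_plus _ _ _ _ _ _
                    (is_RInt_scal _ _ _ (fst p) _ (int_single (snd p) N H1)) (IH H2)).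
    match type of H0 with is_RInt _ _ _ ?v => replace v with 0 in H0
      by (unfold plus, scal; simpl; unfold mult; simpl; ring) end.
    exact H0.
Qed.

Lemma sexpr_sin : sexpr 1 sin.
Proof.
  exists ((1, 1%Z) :: nil). split.
  - constructor; [simpl; lia| constructor].
  - intros t. unfold sinsum; simpl. rewrite Rmult_1_l, Rmult_1_l. ring.
Qed.

Lemma core (a b c d : nat) : d = (a + b + c + 2)%nat ->
  RInt (fun y => chebU a y * chebU b y * chebU c y * chebU d y * sqrt (1 - y ^ 2)) (-1) 1 = 0.
Proof.
  intros Hd.
  set (f := fun y => chebU a y * chebU b y * chebU c y * chebU d y * sqrt (1 - y ^ 2)).
  assert (Hc : forall x, continuous f x).
  { intros x. unfold f.
    repeat apply (@continuous_mult R_UniformSpace R_AbsRing); try apply chebU_cont.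
    apply continuous_sqrt_comp.
    apply (@ex_derive_continuous R_AbsRing R_NormedModule). auto_derive. auto. }
  rewrite <- cos_PI, <- cos_0.
  rewrite <- (RInt_comp f cos (fun t => - sin t) PI 0).
  2:{ intros x _. apply Hc. }
  2:{ intros x _. split.
      - auto_derive; auto. ring.
      - apply (@ex_derive_continuous R_AbsRing R_NormedModule). auto_derive. auto. }
  destruct (expr_U a (1 + c + b) _ (expr_U b (1 + c) _ (expr_U c 1 _ sexpr_sin)))
    as [L [HL HLe]].
  assert (HI := int_sum L (Z.of_nat (S d))).
  assert (HI' : is_RInt (fun t => sin t * f (cos t)) 0 PI 0).
  { apply is_RInt_ext with (fun t => sinsum L t * sin (IZR (Z.of_nat (S d)) * t)).
    2:{ apply HI. eapply Forall_impl; [|exact HL]. intros p Hp; simpl in *; lia. }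
    intros x Hx. rewrite Rmin_left, Rmax_right in Hx by (pose proof PI_RGT_0; lra).
    rewrite <- HLe, <- INR_IZR_INZ, <- sin_U.
    unfold f.
    assert (Hs : sqrt (1 - cos x ^ 2) = sin x).
    { replace (1 - cos x ^ 2) with (sin x ^ 2) by (pose proof (sin2_cos2 x); unfold Rsqr in *; simpl; nra).
      apply sqrt_pow2. left. apply sin_gt_0; lra. }
    rewrite Hs. match goal with |- ?A = ?B => assert (E: A = B :> R) by ring; exact E end. }
  apply is_RInt_unique.
  apply is_RInt_ext with (fun t => opp (sin t * f (cos t))).
  { intros x _. unfold opp, scal; simpl. unfold mult; simpl. ring. }
  assert (H0 := is_RInt_swap _ _ _ _ (is_RInt_opp _ _ _ _ HI')).
  match type of H0 with is_RInt _ _ _ ?v => replace v with 0 in H0 by (unfold opp; simpl; ring) end.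
  exact H0.
Qed.

Theorem lemma5p1 (i j k m : nat) :
  (omega i + omega j + omega k - omega m = 0 \/
   omega i + omega j - omega k + omega m = 0 \/
   omega i - omega j + omega k + omega m = 0 \/
   - omega i + omega j + omega k + omega m = 0) ->
  Ccoef i j k m = 0.
Proof.
  unfold Ccoef, omega.
  intros H.
  cut (RInt (fun y => chebU i y * chebU j y * chebU k y * chebU m y * sqrt (1 - y ^ 2)) (-1) 1 = 0).
  { intros E; rewrite E; ring. }
  destruct H as [H|[H|[H|H]]].
  - apply core. apply INR_eq. rewrite !plus_INR. simpl. lra.
  - rewrite (RInt_ext _ (fun y => chebU i y * chebU j y * chebU m y * chebU k y * sqrt (1 - y ^ 2)))
      by (intros; match goal with |- ?A = ?B => assert (E: A = B :> R) by ring; exact E end).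
    apply core. apply INR_eq. rewrite !plus_INR. simpl. lra.
  - rewrite (RInt_ext _ (fun y => chebU i y * chebU k y * chebU m y * chebU j y * sqrt (1 - y ^ 2)))
      by (intros; match goal with |- ?A = ?B => assert (E: A = B :> R) by ring; exact E end).
    apply core. apply INR_eq. rewrite !plus_INR. simpl. lra.
  - rewrite (RInt_ext _ (fun y => chebU j y * chebU k y * chebU m y * chebU i y * sqrt (1 - y ^ 2)))
      by (intros; match goal with |- ?A = ?B => assert (E: A = B :> R) by ring; exact E end).
    apply core. apply INR_eq. rewrite !plus_INR. simpl. lra.
Qed.
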